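(* Let $T=(p,q:F\to E)$ be a textile system in which $F$ is source-free, $q|_{F^0}:F^0\to E^0$ is onto, and $q$ has $r$-path lifting. Then $\mathsf X^+_T$ is nonempty.
   Context: Directed graph $F=(F^0,F^1,r,s)$; source-free means $r:F^1\to F^0$ is onto. Textile system $T=(p,q:F\to E)$: graph homomorphisms $p,q$ (commuting with $r,s$) with $f\mapsto(r(f),p(f),s(f),q(f))$ injective on $F^1$. $q$ has $r$-path lifting if for all $v\in F^0$, $e\in E^1$ with $q(v)=r(e)$ there exists (not necessarily unique) $f\in F^1$ with $q(f)=e$ and $r(f)=v$. $\mathsf X^+_T=\{x:\mathbb N^2\to F^1: s(x_n)=r(x_{n+\varepsilon_1}),\ p(x_n)=q(x_{n+\varepsilon_2})\ \forall n\in\mathbb N^2\}$, $\mathbb N=\{0,1,\dots\}$. *)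

(* Defs.v *)
Set Implicit Arguments.

Record graph := Graph {
  vert : Type;
  edge : Type;
  rg   : edge -> vert;
  sc   : edge -> vert }.
Arguments rg {g} _.
Arguments sc {g} _.

Definition source_free (F : graph) : Prop :=
  forall v : vert F, exists f : edge F, rg f = v.

Record graph_hom (F E : graph) := GraphHom {
  hv : vert F -> vert E;
  he : edge F -> edge E;
  hom_rg : forall f, rg (he f) = hv (rg f);
  hom_sc : forall f, sc (he f) = hv (sc f) }.
Arguments hv {F E} _ _.
Arguments he {F E} _ _.

Definition textile_system (F E : graph) (p q : graph_hom F E) : Prop :=
  forall f g : edge F,
    rg f = rg g -> he p f = he p g -> sc f = sc g -> he q f = he q g -> f = g.

Definition r_path_lifting (F E : graph) (q : graph_hom F E) : Prop :=
  forall (v : vert F) (e : edge E), hv q v = rg e ->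
    exists f : edge F, he q f = e /\ rg f = v.

(** X^+_T, with N^2 = nat * nat, eps1 = (1,0), eps2 = (0,1). *)
Definition in_XplusT (F E : graph) (p q : graph_hom F E)
    (x : nat * nat -> edge F) : Prop :=
  forall i j : nat,
    sc (x (i, j)) = rg (x (S i, j)) /\
    he p (x (i, j)) = he q (x (i, S j)).

(* Main.v *)
Require Import Defs.
From Stdlib Require Import ClassicalEpsilon.

Theorem theorem3p6 (F E : graph) (p q : graph_hom F E)
  (HT : textile_system p q)
  (HF0 : inhabited (vert F))
  (Hsf : source_free F)
  (Honto : forall w : vert E, exists v : vert F, hv q v = w)
  (Hlift : r_path_lifting q) :
  exists x : nat * nat -> edge F, in_XplusT p q x.
Proof.
  assert (inhE : inhabited (edge F)).
  { destruct HF0 as [v]. destruct (Hsf v) as [f _]. exact (inhabits f). }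
  set (nxt := fun f : edge F => epsilon inhE (fun g => rg g = sc f)).
  assert (Hnxt : forall f, rg (nxt f) = sc f).
  { intro f. unfold nxt. apply epsilon_spec. apply Hsf. }
  set (st := fun e : edge E => epsilon HF0 (fun v => hv q v = rg e)).
  assert (Hst : forall e, hv q (st e) = rg e).
  { intro e. unfold st. apply epsilon_spec. apply Honto. }
  set (L := fun (e : edge E) (v : vert F) =>
              epsilon inhE (fun f => he q f = e /\ rg f = v)).
  assert (HL : forall e v, hv q v = rg e -> he q (L e v) = e /\ rg (L e v) = v).
  { intros e v H. unfold L. apply epsilon_spec. apply Hlift. exact H. }
  set (f0 := epsilon inhE (fun _ => True)).
  set (row0 := fix r0 (i : nat) : edge F :=
                 match i with 0 => f0 | S i => nxt (r0 i) end).
  set (nrow := fun r : nat -> edge F =>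
                 fix nr (i : nat) : edge F :=
                   match i with
                   | 0 => L (he p (r 0)) (st (he p (r 0)))
                   | S i => L (he p (r (S i))) (sc (nr i)) end).
  set (good := fun r : nat -> edge F => forall i, sc (r i) = rg (r (S i))).
  assert (Hn : forall r, good r -> forall i,
             he q (nrow r i) = he p (r i) /\ rg (nrow r (S i)) = sc (nrow r i)).
  { intros r Hr i. induction i as [|i IH].
    - assert (H0 := HL (he p (r 0)) (st (he p (r 0))) (Hst _)).
      split. { simpl. apply H0. }
      change (rg (L (he p (r 1)) (sc (nrow r 0))) = sc (nrow r 0)).
      apply HL. destruct H0 as [H0 _].
      change (hv q (sc (nrow r 0)) = rg (he p (r 1))).
      change (he q (nrow r 0) = he p (r 0)) in H0.
      rewrite <- (hom_sc q), H0, hom_sc, Hr, hom_rg. reflexivity.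
    - destruct IH as [IH1 IH2].
      assert (H1 : he q (nrow r (S i)) = he p (r (S i))).
      { simpl. apply HL. rewrite <- (hom_sc q).
        change (sc (he q (nrow r i)) = rg (he p (r (S i)))).
        rewrite IH1, hom_sc, Hr, hom_rg. reflexivity. }
      split. exact H1.
      change (rg (L (he p (r (S (S i)))) (sc (nrow r (S i)))) = sc (nrow r (S i))).
      apply HL. rewrite <- (hom_sc q), H1, hom_sc, Hr, hom_rg. reflexivity. }
  set (rows := fix rs (j : nat) : nat -> edge F :=
                 match j with 0 => row0 | S j => nrow (rs j) end).
  assert (Hg : forall j, good (rows j)).
  { intro j. induction j as [|j IH].
    - intro i. simpl. symmetry. apply Hnxt.
    - intro i. simpl. symmetry. apply (Hn _ IH i). }
  exists (fun ij => rows (snd ij) (fst ij)).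
  intros i j. simpl. split.
  - apply Hg.
  - symmetry. apply (Hn _ (Hg j) i).
Qed.
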